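(* Let $\pi$ be a model with data space $Y$ and parameter space $\Theta$, $\phi$ a posterior family and $f$ a test quantity. (1) If $\pi$ has no ties with respect to $f$, then for every $y$ the quantile function $C^{-1}_f(\cdot\mid y)$ is the inverse of $C_f(\cdot\mid y)$, and $C_f(\cdot\mid y)$ is a surjection onto $[0,1]$. (2) If $\phi$ has no ties with respect to $f$, then for every $y$ the quantile function $C^{-1}_{\phi,f}(\cdot\mid y)$ is the inverse of $C_{\phi,f}(\cdot\mid y)$, and $C_{\phi,f}(\cdot\mid y)$ is a surjection onto $[0,1]$. (3) If both $\pi$ and $\phi$ have no ties with respect to $f$, then $q_{\phi,f}(x\mid y)=C_f\big(C^{-1}_{\phi,f}(x\mid y)\mid y\big)$ and $q_{\phi,f}(\cdot\mid y)$ is a bijection from $[0,1]$ to $[0,1]$.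
   Context: Model $\pi$: prior density $\pi_{\text{prior}}(\theta)$ on $\Theta$, observation density $\pi_{\text{obs}}(y\mid\theta)$ on $Y$, $\pi_{\text{marg}}(y)=\int_\Theta\pi_{\text{obs}}(y\mid\theta)\pi_{\text{prior}}(\theta)\,\mathrm{d}\theta$, $\pi_{\text{post}}(\theta\mid y)=\pi_{\text{obs}}(y\mid\theta)\pi_{\text{prior}}(\theta)/\pi_{\text{marg}}(y)$. A posterior family is $\phi:\Theta\times Y\to\mathbb{R}^+$ with $\int_\Theta\phi(\theta\mid y)\,\mathrm{d}\theta=1$ for all $y$; a test quantity is a measurable $f:\Theta\times Y\to\mathbb{R}$. On the extended reals $\bar{\mathbb{R}}$: $C_{\phi,f}(s\mid y)=\int_\Theta\mathbb{I}[f(\theta,y)\le s]\phi(\theta\mid y)\,\mathrm{d}\theta$, $C_f(s\mid y)=\int_\Theta\mathbb{I}[f(\theta,y)\le s]\pi_{\text{post}}(\theta\mid y)\,\mathrm{d}\theta$, $C^{-1}_{\phi,f}(x\mid y)=\inf\{s: x\le C_{\phi,f}(s\mid y)\}$, $C^{-1}_f(x\mid y)=\inf\{s:x\le C_f(s\mid y)\}$, $D_{\phi,f}(s\mid y)=\int_\Theta\mathbb{I}[f(\theta,y)=s]\phi(\theta\mid y)\,\mathrm{d}\theta$, $D_f(s\mid y)=\int_\Theta\mathbb{I}[f(\theta,y)=s]\pi_{\text{post}}(\theta\mid y)\,\mathrm{d}\theta$. $\pi$ has ties w.r.t. $f$ if $D_f(f(\tilde\theta,y)\mid y)>0$ for some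 $y,\tilde\theta$; $\phi$ has ties w.r.t. $f$ if $D_{\phi,f}(f(\tilde\theta,y)\mid y)>0$ for some $y,\tilde\theta$. With $U\sim\mathrm{uniform}[0,1]$, $r_{\phi,f}(x\mid\tilde\theta,y)=\Pr\big(C_{\phi,f}(f(\tilde\theta,y)\mid y)-U\,D_{\phi,f}(f(\tilde\theta,y)\mid y)\le x\big)$, $q_{\phi,f}(x\mid y)=\int_\Theta\pi_{\text{post}}(\tilde\theta\mid y)r_{\phi,f}(x\mid\tilde\theta,y)\,\mathrm{d}\tilde\theta$. *)

(* Defs.v *)
From HB Require Import structures.
From mathcomp Require Import all_boot all_order all_algebra.
From mathcomp Require Import all_classical all_reals all_analysis.
Set Implicit Arguments. Unset Strict Implicit. Unset Printing Implicit Defensive.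
Import Order.TTheory GRing.Theory Num.Theory.
Local Open Scope classical_set_scope.
Local Open Scope ring_scope.

Section Defs.
Context {R : realType} {dT : measure_display} {T : measurableType dT}
  {dY : measure_display} {Y : measurableType dY}.
Variable mu : {measure set T -> \bar R}.

(* Conventions: a function  g : T -> Y -> R  stands for theta, y |-> g(theta | y);
   obs t y = pi_obs(y | t). *)

Definition pp_marg (prior : T -> R) (obs : T -> Y -> R) (y : Y) : \bar R :=
  (\int[mu]_t (obs t y * prior t)%:E)%E.

Definition pp_post (prior : T -> R) (obs : T -> Y -> R) (t : T) (y : Y) : R :=
  obs t y * prior t / fine (pp_marg prior obs y).

(* C_{g,f}(s | y) for a density family g (C_f is the case g = pp_post) *)
Definition pp_cdf (g : T -> Y -> R) (f : T -> Y -> R) (y : Y) (s : \bar R) : R :=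
  fine (\int[mu]_t ((((f t y)%:E <= s)%E)%:R * g t y)%:E)%E.

Definition pp_qf (g : T -> Y -> R) (f : T -> Y -> R) (y : Y) (x : R) : \bar R :=
  ereal_inf [set s : \bar R | (x%:E <= (pp_cdf g f y s)%:E)%E].

Definition pp_atom (g : T -> Y -> R) (f : T -> Y -> R) (y : Y) (s : R) : R :=
  fine (\int[mu]_t (((f t y == s))%:R * g t y)%:E)%E.

Definition pp_has_ties (g : T -> Y -> R) (f : T -> Y -> R) : Prop :=
  exists (y : Y) (t : T), 0 < pp_atom g f y (f t y).

(* r_{phi,f}(x | t, y) = Pr(C - U D <= x), U ~ uniform[0,1] (Lebesgue measure on [0,1]) *)
Definition pp_rk (phi : T -> Y -> R) (f : T -> Y -> R) (x : R) (t : T) (y : Y) : R :=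
  fine (@lebesgue_measure R
    ([set u : R | 0 <= u <= 1] `&`
     [set u : R | pp_cdf phi f y (f t y)%:E - u * pp_atom phi f y (f t y) <= x])).

Definition pp_qk (prior : T -> R) (obs : T -> Y -> R) (phi : T -> Y -> R)
  (f : T -> Y -> R) (x : R) (y : Y) : R :=
  fine (\int[mu]_t (pp_post prior obs t y * pp_rk phi f x t y)%:E)%E.

End Defs.

(* Main.v *)
Require Import Defs.
From HB Require Import structures.
From mathcomp Require Import all_boot all_order all_algebra.
From mathcomp Require Import all_classical all_reals all_analysis.
Import Order.TTheory GRing.Theory Num.Theory.
Local Open Scope classical_set_scope.
Local Open Scope ring_scope.

From mathcomp Require Import lra.

Lemma exists_inv (R : realType) (e : R) : 0 < e -> exists n : nat, n.+1%:R^-1 < e.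
Proof.
move=> e0; have [N _ /(_ N)/(_ (leqnn _)) Ne] := near_infty_natSinv_lt (PosNum e0).
by exists N.
Qed.

Lemma cvge_ge {R : realType} (u : nat -> \bar R) l x :
  u @ \oo --> l -> (forall n, (x <= u n)%E) -> (x <= l)%E.
Proof.
move=> ul ux; rewrite -(cvg_lim _ ul) //; apply: lime_ge.
  by apply/cvg_ex; exists l.
exact: nearW.
Qed.

Lemma cvge_le {R : realType} (u : nat -> \bar R) l x :
  u @ \oo --> l -> (forall n, (u n <= x)%E) -> (l <= x)%E.
Proof.
move=> ul ux; rewrite -(cvg_lim _ ul) //; apply: lime_le.
  by apply/cvg_ex; exists l.
exact: nearW.
Qed.

Section Dens.
Context {R : realType} {d : measure_display} {T : measurableType d}.
Variable mu : {measure set T -> \bar R}.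
Variable g : T -> R.
Hypothesis mg : measurable_fun setT g.
Hypothesis g0 : forall t, 0 <= g t.

Definition Pg (A : set T) : \bar R := (\int[mu]_(t in A) (g t)%:E)%E.

Let Pg0 : Pg set0 = 0%E. Proof. by rewrite /Pg integral_set0. Qed.
Let Pg_ge0 A : (0 <= Pg A)%E. Proof. by apply: integral_ge0 => t _; rewrite lee_fin. Qed.
Let Pg_sadd : semi_sigma_additive Pg.
Proof.
apply: semi_sigma_additive_nng_induced.
  exact/measurable_realfun.measurable_EFinP.
by move=> t; rewrite lee_fin.
Qed.
HB.instance Definition _ := isMeasure.Build _ _ _ Pg Pg0 Pg_ge0 Pg_sadd.

Lemma int_indicP (P : T -> bool) :
  (\int[mu]_t ((P t)%:R * g t)%:E)%E = Pg [set t | P t].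
Proof.
rewrite /Pg [RHS]integral_mkcond; apply: eq_integral => t _.
rewrite /patch; case: ifPn => [/[!inE] ->|H]; first by rewrite mul1r.
have -> : P t = false by apply/negbTE; apply: contra H => Pt; rewrite inE.
by rewrite mul0r.
Qed.


Hypothesis g1 : (\int[mu]_t (g t)%:E = 1)%E.

Lemma PgT : Pg setT = 1%E. Proof. exact: g1. Qed.

Lemma Pg_le1 A : measurable A -> (Pg A <= 1)%E.
Proof. by move=> mA; rewrite -PgT; apply: le_measure; rewrite ?inE. Qed.

Lemma Pg_fin A : measurable A -> Pg A \is a fin_num.
Proof. move=> mA; rewrite ge0_fin_numE; last exact: Pg_ge0.
by apply: le_lt_trans (@Pg_le1 A mA) _; rewrite ltry. Qed.

Variable h : T -> R.
Hypothesis mh : measurable_fun setT h.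

Definition CE (s : \bar R) := Pg [set t | ((h t)%:E <= s)%E].

Lemma mle s : measurable [set t | ((h t)%:E <= s)%E].
Proof.
case: s => [r| |].
- rewrite (_ : [set t | _] = setT `&` h @^-1` `]-oo, r]); first exact: mh.
  by apply/seteqP; split => t /=; rewrite in_itv /= lee_fin; [move=> -> | case].
- rewrite (_ : [set t | _] = setT) //; apply/seteqP; split => t //= _.
  by rewrite leey.
- rewrite (_ : [set t | _] = set0) //; apply/seteqP; split => t //=.
Qed.

Lemma mlt r : measurable [set t | h t < r].
Proof.
rewrite (_ : [set t | _] = setT `&` h @^-1` `]-oo, r[); first exact: mh.
by apply/seteqP; split => t /=; rewrite in_itv /=; [move=> -> | case].
Qed.

Lemma meq r : measurable [set t | h t = r].
Proof.
rewrite (_ : [set t | _] = setT `&` h @^-1` [set r]); first exact: mh.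
by apply/seteqP; split => t /=; [move=> -> | case].
Qed.


Lemma CE_ge0 s : (0 <= CE s)%E. Proof. exact: Pg_ge0. Qed.
Lemma CE_le1 s : (CE s <= 1)%E. Proof. exact: Pg_le1 (mle s). Qed.
Lemma CE_fin s : CE s \is a fin_num. Proof. exact: Pg_fin (mle s). Qed.

Lemma CEny : CE -oo = 0%E.
Proof.
rewrite /CE (_ : [set t | _] = set0) ?Pg0 //.
by apply/seteqP; split => t //=; rewrite leeNy_eq.
Qed.

Lemma CEy : CE +oo = 1%E.
Proof.
rewrite /CE (_ : [set t | _] = setT) ?PgT //.
by apply/seteqP; split => t //= _; rewrite leey.
Qed.

Lemma CE_nd s1 s2 : (s1 <= s2)%E -> (CE s1 <= CE s2)%E.
Proof.
move=> s12; apply: le_measure; rewrite ?inE; try exact: mle.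
by move=> t /= hs; apply: le_trans hs s12.
Qed.


Lemma CE_right r : (fun n => CE (r + n.+1%:R^-1)%:E) @ \oo --> CE r%:E.
Proof.
rewrite /CE (_ : [set t | ((h t)%:E <= r%:E)%E] =
  \bigcap_n [set t | ((h t)%:E <= (r + n.+1%:R^-1)%:E)%E]).
  apply: (@nonincreasing_cvg_mu _ _ _ Pg
     (fun n => [set t | ((h t)%:E <= (r + n.+1%:R^-1)%:E)%E])).
  - by apply: le_lt_trans (@Pg_le1 _ (mle _)) _; rewrite ltry.
  - by move=> i; exact: mle.
  - by apply: bigcapT_measurable => i; exact: mle.
  - move=> m n mn; apply/subsetPset => t /= H; apply: le_trans H _; rewrite lee_fin lerD2l.
    by rewrite lef_pV2 ?posrE // ler_nat.
apply/seteqP; split => t /=.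
  move=> H n _ /=; apply: le_trans H _; rewrite lee_fin lerDl invr_ge0 //.
move=> H; rewrite lee_fin; apply/negPn/negP; rewrite -ltNge => rh.
have e0 : 0 < h t - r by rewrite subr_gt0.
have [n hn] := @exists_inv _ _ e0.
have := H n I; rewrite /= lee_fin -lerBlDl => H'.
by have := lt_le_trans hn H'; rewrite ltxx.
Qed.

Lemma CE_left r : (fun n => CE (r - n.+1%:R^-1)%:E) @ \oo --> Pg [set t | h t < r].
Proof.
rewrite /CE (_ : [set t | h t < r] =
  \bigcup_n [set t | ((h t)%:E <= (r - n.+1%:R^-1)%:E)%E]).
  apply: (@nondecreasing_cvg_mu _ _ _ Pg
     (fun n => [set t | ((h t)%:E <= (r - n.+1%:R^-1)%:E)%E])).
  - by move=> i; exact: mle.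
  - by apply: bigcupT_measurable => i; exact: mle.
  - move=> m n mn; apply/subsetPset => t /= H; apply: le_trans H _; rewrite lee_fin lerD2l lerN2.
    by rewrite lef_pV2 ?posrE // ler_nat.
apply/seteqP; split => t /=.
  move=> rh. have e0 : 0 < r - h t. by rewrite subr_gt0.
  have [n hn] := @exists_inv _ _ e0.
  exists n => //=; rewrite lee_fin lerBrDr; apply: ltW; rewrite -ltrBrDl //.
move=> [n _ /=]; rewrite lee_fin => H.
by apply: le_lt_trans H _; rewrite ltrBlDr ltrDl invr_gt0 ltr0n.
Qed.

Lemma CE_top : (fun n => CE (n%:R)%:E) @ \oo --> 1%E.
Proof.
rewrite -PgT /CE (_ : setT = \bigcup_n [set t | ((h t)%:E <= (n%:R)%:E)%E]).
  apply: (@nondecreasing_cvg_mu _ _ _ Pg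
     (fun n => [set t | ((h t)%:E <= (n%:R)%:E)%E])).
  - by move=> i; exact: mle.
  - by apply: bigcupT_measurable => i; exact: mle.
  - move=> m n mn; apply/subsetPset => t /= H; apply: le_trans H _; rewrite lee_fin ler_nat //.
apply/seteqP; split => t //= _.
exists (Num.truncn (h t)).+1 => //=; rewrite lee_fin.
exact: ltW (truncnS_gt _).
Qed.

Lemma CE_bot : (fun n => CE (- n%:R)%:E) @ \oo --> 0%E.
Proof.
rewrite -Pg0 /CE (_ : set0 = \bigcap_n [set t | ((h t)%:E <= (- n%:R)%:E)%E]).
  apply: (@nonincreasing_cvg_mu _ _ _ Pg
     (fun n => [set t | ((h t)%:E <= (- n%:R)%:E)%E])).
  - by apply: le_lt_trans (@Pg_le1 _ (mle _)) _; rewrite ltry.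
  - by move=> i; exact: mle.
  - by apply: bigcapT_measurable => i; exact: mle.
  - move=> m n mn; apply/subsetPset => t /= H; apply: le_trans H _; rewrite lee_fin lerN2 ler_nat //.
apply/seteqP; split => t //= H.
have := H (Num.truncn (- h t)).+1 I; rewrite /= lee_fin.
have := truncnS_gt (- h t).
lra.
Qed.


Lemma CE_lt r : (forall r, Pg [set t | h t = r] = 0%E) ->
  Pg [set t | h t < r] = CE r%:E.
Proof.
move=> na; rewrite /CE (_ : [set t | ((h t)%:E <= r%:E)%E] =
   [set t | h t < r] `|` [set t | h t = r]).
  rewrite measureU; [|exact: mlt|exact: meq|].
    by rewrite -[X in (_ + X)%E]/(Pg [set t | h t = r]) na adde0.
  by apply/seteqP; split => t //= [/= lt eq]; move: lt; rewrite eq ltxx.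
apply/seteqP; split => t /=.
  by rewrite lee_fin le_eqVlt => /orP[/eqP->|->]; [right|left].
by rewrite lee_fin => -[/ltW|->].
Qed.

Definition Q (x : R) := ereal_inf [set s : \bar R | (x%:E <= CE s)%E].

Lemma CEQ x : (forall r, Pg [set t | h t = r] = 0%E) -> 0 <= x <= 1 ->
  CE (Q x) = x%:E.
Proof.
move=> na /andP[x0 x1].
have lbQ s : (x%:E <= CE s)%E -> (Q x <= s)%E.
  by move=> Ss; apply: ereal_inf_lbound.
apply/eqP; rewrite eq_le; apply/andP; split.
- case EQ: (Q x) => [r| |].
  + rewrite -(CE_lt r na); apply: (@cvge_le R _ _ _ (CE_left r)) => n.
    apply/ltW; rewrite ltNge; apply/negP => Sn.
    have := lbQ _ Sn; rewrite EQ lee_fin lerBrDr gerDl.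
    by rewrite leNgt invr_gt0 ltr0n.
  + rewrite CEy; apply: (@cvge_le R _ _ _ CE_top) => n.
    apply/ltW; rewrite ltNge; apply/negP => Sn.
    by have := lbQ _ Sn; rewrite EQ leye_eq.
  + by rewrite CEny lee_fin.
- case EQ: (Q x) => [r| |].
  + apply: (@cvge_ge R _ _ _ (CE_right r)) => n.
    have [[s Ss slt]|H] := pselect (exists2 s, (x%:E <= CE s)%E &
                                        (s < (r + n.+1%:R^-1)%:E)%E).
      exact: le_trans Ss (CE_nd _ _ (ltW slt)).
    exfalso; have : ((r + n.+1%:R^-1)%:E <= Q x)%E.
      apply: le_ereal_inf_tmp => s Ss; rewrite leNgt; apply/negP => sl.
      by apply: H; exists s.
    by rewrite EQ lee_fin gerDl leNgt invr_gt0 ltr0n.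
  + by rewrite CEy lee_fin.
  + rewrite CEny; apply: (@cvge_ge R _ _ _ CE_bot) => n.
    have [[s Ss slt]|H] := pselect (exists2 s, (x%:E <= CE s)%E &
                                        (s < (- n%:R)%:E)%E).
      exact: le_trans Ss (CE_nd _ _ (ltW slt)).
    exfalso; have : ((- n%:R)%:E <= Q x)%E.
      apply: le_ereal_inf_tmp => s Ss; rewrite leNgt; apply/negP => sl.
      by apply: H; exists s.
    by rewrite EQ leeNy_eq.
Qed.

End Dens.

Arguments CE_nd {R d T mu g} mg g0 {h} mh {s1 s2}.
Arguments CE_lt {R d T mu g} mg g0 {h} mh r.
Arguments CEQ {R d T mu g} mg g0 g1 {h} mh x.
Arguments CEy {R d T mu g} g1 h.
Arguments CEny {R d T mu g h}.
Arguments CE_ge0 {R d T mu g} g0 {h} s.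
Arguments CE_le1 {R d T mu g} mg g0 g1 {h} mh s.
Arguments CE_fin {R d T mu g} mg g0 g1 {h} mh s.
Arguments PgT {R d T mu g}.
Arguments Pg_le1 {R d T mu g} mg g0 g1 {A}.
Arguments Pg_fin {R d T mu g} mg g0 g1 {A}.
Arguments mle {R d T h}.
Arguments CE_left {R d T mu g} mg g0 {h} mh r.
Arguments CE_right {R d T mu g} mg g0 g1 {h} mh r.
Arguments CE_top {R d T mu g} mg g0 g1 {h} mh.
Arguments mlt {R d T h}.
Arguments meq {R d T h}.

Section Two.
Context {R : realType} {d : measure_display} {T : measurableType d}.
Variable mu : {measure set T -> \bar R}.

Lemma Pg_null (g : T -> R) : measurable_fun setT g -> (forall t, 0 < g t) ->
  forall A, measurable A -> Pg mu g A = 0%E -> mu A = 0%E.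
Proof.
move=> mg gp A mA PA.
have H := @ae_eq_integral_abs _ _ _ mu A mA (fun t => (g t)%:E).
have : (fun t => (g t)%:E) = cst 0%E %[ae mu in A].
  apply: (iffLR (H _)).
    by apply/measurable_realfun.measurable_EFinP; exact: measurable_funTS.
  rewrite -PA /Pg; apply: eq_integral => t _; rewrite gee0_abs // lee_fin ltW //.
move=> [N [mN N0 sub]].
apply/eqP; rewrite -measure_le0 -N0; apply: le_measure; rewrite ?inE //.
move=> t At; apply: sub => /(_ At) [] geq.
by have := gp t; rewrite geq ltxx.
Qed.

Lemma null_Pg (g : T -> R) : measurable_fun setT g ->
  forall A, measurable A -> mu A = 0%E -> Pg mu g A = 0%E.
Proof.
move=> mg A mA A0; apply: null_set_integral => //.
by apply/measurable_realfun.measurable_EFinP; exact: measurable_funTS.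
Qed.

Lemma Pg_split (g : T -> R) : measurable_fun setT g -> (forall t, 0 <= g t) ->
  forall A B, measurable A -> measurable B -> A `<=` B ->
  Pg mu g B = (Pg mu g A + Pg mu g (B `\` A))%E.
Proof.
move=> mg g0 A B mA mB AB.
rewrite -{1}(setDUK AB) (measureU (Pg mu g)) //; first exact: measurableD.
by apply/seteqP; split => t //= [At []].
Qed.


End Two.
Arguments Pg_split {R d T mu g} _ _ {A B}.
Arguments Pg_null {R d T mu g} _ _ {A}.
Arguments null_Pg {R d T mu g} _ {A}.

Section Three.
Context {R : realType} {d : measure_display} {T : measurableType d}.
Variable mu : {measure set T -> \bar R}.

Lemma CE_eq (g1 g2 : T -> R) h :
  measurable_fun setT g1 -> (forall t, 0 < g1 t) -> (\int[mu]_t (g1 t)%:E = 1)%E ->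
  measurable_fun setT g2 -> (forall t, 0 < g2 t) ->
  measurable_fun setT h ->
  forall s1 s2, (s1 <= s2)%E -> CE mu g1 h s1 = CE mu g1 h s2 ->
  CE mu g2 h s1 = CE mu g2 h s2.
Proof.
move=> mg1 g1p int1 mg2 g2p mh s1 s2 s12 e.
have g10 t : 0 <= g1 t by exact: ltW.
have g20 t : 0 <= g2 t by exact: ltW.
have AB : [set t | ((h t)%:E <= s1)%E] `<=` [set t | ((h t)%:E <= s2)%E].
  by move=> t /= H; exact: le_trans H s12.
have mA := mle mh s1; have mB := mle mh s2.
have mD := measurableD mB mA.
have E1 := Pg_split mg1 g10 mA mB AB.
have E2 := Pg_split mg2 g20 mA mB AB.
have fA := Pg_fin mg1 g10 int1 mA.
set A := [set t | ((h t)%:E <= s1)%E] in AB mA E1 E2 fA mD *.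
set B := [set t | ((h t)%:E <= s2)%E] in AB mB E1 E2 mD *.
have D1 : Pg mu g1 (B `\` A) = 0%E.
  rewrite -(@addeK _ (Pg mu g1 A) (Pg mu g1 (B `\` A)) fA).
  rewrite (addeC (Pg mu g1 (B `\` A))) -E1.
  by rewrite /CE in e; rewrite -e subee.
have D0 := Pg_null mg1 g1p mD D1.
by rewrite /CE E2 (null_Pg mg2 mD D0) adde0.
Qed.

End Three.
Arguments CE_eq {R d T mu g1 g2 h}.


Section Four.
Context {R : realType} {d : measure_display} {T : measurableType d}.
Variable mu : {measure set T -> \bar R}.
Variables (g1 g2 h : T -> R).
Hypotheses (mg1 : measurable_fun setT g1) (g1p : forall t, 0 < g1 t)
  (int1 : (\int[mu]_t (g1 t)%:E = 1)%E).
Hypotheses (mg2 : measurable_fun setT g2) (g2p : forall t, 0 < g2 t)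
  (int2 : (\int[mu]_t (g2 t)%:E = 1)%E).
Hypothesis mh : measurable_fun setT h.
Hypothesis na2 : forall r, Pg mu g2 [set t | h t = r] = 0%E.

Let g10 t : 0 <= g1 t. Proof. exact: ltW. Qed.
Let g20 t : 0 <= g2 t. Proof. exact: ltW. Qed.

Lemma q_core x :
  Pg mu g1 [set t | (CE mu g2 h (h t)%:E <= x%:E)%E] = CE mu g1 h (Q mu g2 h x).
Proof.
set S := [set s | (CE mu g2 h s <= x%:E)%E].
set b := ereal_sup S.
have Cb : b != -oo%E -> (CE mu g2 h b <= x%:E)%E.
  case Eb: b => [r| |] // _.
  - rewrite -(CE_lt mg2 g20 mh r na2).
    apply: (@cvge_le R _ _ _ (CE_left mg2 g20 mh r)) => n.
    have [[s Ss slt]|H] := pselect (exists2 s, S s & ((r - n.+1%:R^-1)%:E < s)%E).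
      exact: le_trans (CE_nd mg2 g20 mh (ltW slt)) Ss.
    exfalso; have : (b <= (r - n.+1%:R^-1)%:E)%E.
      apply: ge_ereal_sup => s Ss; rewrite leNgt; apply/negP => sl.
      by apply: H; exists s.
    by rewrite Eb lee_fin lerBrDr gerDl leNgt invr_gt0 ltr0n.
  - rewrite (CEy int2 h); apply: (@cvge_le R _ _ _ (CE_top mg2 g20 int2 mh)) => n.
    have [[s Ss slt]|H] := pselect (exists2 s, S s & ((n%:R)%:E < s)%E).
      exact: le_trans (CE_nd mg2 g20 mh (ltW slt)) Ss.
    exfalso; have : (b <= (n%:R)%:E)%E.
      apply: ge_ereal_sup => s Ss; rewrite leNgt; apply/negP => sl.
      by apply: H; exists s.
    by rewrite Eb leye_eq.
have Ab : [set t | (CE mu g2 h (h t)%:E <= x%:E)%E] = [set t | ((h t)%:E <= b)%E].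
  apply/seteqP; split => t /=.
    by move=> H; apply: ereal_sup_ubound.
  move=> H; apply: le_trans _ (Cb _).
    exact (CE_nd mg2 g20 mh H).
  by apply/negP => /eqP bn; move: H; rewrite bn leeNy_eq.
rewrite Ab -/(CE mu g1 h b).
have [x0|x0] := ltP x 0.
  have -> : b = -oo%E.
    rewrite /b (_ : S = set0) ?ereal_sup0 //; apply/seteqP; split => s //=.
    move=> H; have := le_trans (CE_ge0 g20 s) H; rewrite lee_fin leNgt x0.
    by [].
  rewrite /Q (_ : [set s | _] = setT) ?ereal_infT //; apply/seteqP; split => s //= _.
  by apply: le_trans (CE_ge0 g20 s); rewrite lee_fin ltW.
have [x1|x1] := ltP 1 x.
  have -> : b = +oo%E.
    rewrite /b (_ : S = setT) ?ereal_supT //; apply/seteqP; split => s //= _.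
    by apply: le_trans (CE_le1 mg2 g20 int2 mh s) _; rewrite lee_fin ltW.
  rewrite /Q (_ : [set s | _] = set0) ?ereal_inf0 //; apply/seteqP; split => s //=.
  move=> H; have := le_trans H (CE_le1 mg2 g20 int2 mh s); rewrite lee_fin leNgt x1.
  by [].
have x01 : 0 <= x <= 1 by rewrite x0 x1.
have CQ := CEQ mg2 g20 int2 mh x na2 x01.
have Qb : (Q mu g2 h x <= b)%E by apply: ereal_sup_ubound; rewrite /S /= CQ.
have [bn|bn] := eqVneq b -oo%E.
  by move: Qb; rewrite bn leeNy_eq => /eqP ->.
apply: esym; apply: (CE_eq mg2 g2p int2 mg1 g1p mh _ _ Qb).
rewrite CQ; apply/eqP; rewrite eq_le Cb // andbT -CQ.
exact (CE_nd mg2 g20 mh Qb).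
Qed.

End Four.
Arguments q_core {R d T mu g1 g2 h}.

Section Link.
Context {R : realType} {dT : measure_display} {T : measurableType dT}
  {dY : measure_display} {Y : measurableType dY}.
Variable mu : {measure set T -> \bar R}.

Lemma cdf_eq (G f : T -> Y -> R) y s :
  pp_cdf mu G f y s = fine (CE mu (fun t => G t y) (fun t => f t y) s).
Proof.
by rewrite /pp_cdf (int_indicP mu (fun t => G t y) (fun t => ((f t y)%:E <= s)%E)).
Qed.

Lemma atom_eq (G f : T -> Y -> R) y r :
  pp_atom mu G f y r = fine (Pg mu (fun t => G t y) [set t | f t y = r]).
Proof.
rewrite /pp_atom (int_indicP mu (fun t => G t y) (fun t => f t y == r)).
congr (fine (Pg _ _ _)); apply/seteqP; split => t /=; first by move/eqP.
by move=> ->.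
Qed.

Lemma qf_eq (G f : T -> Y -> R) y x :
  measurable_fun setT (fun t => G t y) -> (forall t, 0 <= G t y) ->
  (\int[mu]_t (G t y)%:E = 1)%E -> measurable_fun setT (fun t => f t y) ->
  pp_qf mu G f y x = Q mu (fun t => G t y) (fun t => f t y) x.
Proof.
move=> mg g0 g1 mh; rewrite /pp_qf /Q; congr ereal_inf.
by apply/funext => s /=; rewrite cdf_eq fineK // (CE_fin mg g0 g1 mh).
Qed.

Lemma noties_na (G f : T -> Y -> R) y :
  measurable_fun setT (fun t => G t y) -> (forall t, 0 <= G t y) ->
  (\int[mu]_t (G t y)%:E = 1)%E -> measurable_fun setT (fun t => f t y) ->
  ~ pp_has_ties mu G f ->
  forall r, Pg mu (fun t => G t y) [set t | f t y = r] = 0%E.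
Proof.
move=> mg g0 g1 mh nt r.
have [[t ht]|H] := pselect (exists t, f t y = r).
  have fP := Pg_fin mg g0 g1 (meq mh r).
  have P0 : (0 <= Pg mu (fun t => G t y) [set t | f t y = r])%E.
    by apply: integral_ge0 => t0 _; rewrite lee_fin.
  have : ~ (0 < pp_atom mu G f y (f t y)) by move=> ?; apply: nt; exists y, t.
  rewrite atom_eq ht => /negP; rewrite -leNgt => Hle.
  apply/eqP; rewrite eq_le P0 andbT -(fineK fP) lee_fin //.
rewrite (_ : [set t | f t y = r] = set0); first exact: measure0.
by apply/seteqP; split => t //= ft; apply: H; exists t.
Qed.

Lemma part12 (G f : T -> Y -> R) y :
  measurable_fun setT (fun t => G t y) -> (forall t, 0 <= G t y) ->
  (\int[mu]_t (G t y)%:E = 1)%E -> measurable_fun setT (fun t => f t y) ->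
  ~ pp_has_ties mu G f ->
      (forall x : R, x \in `[0, 1] -> pp_cdf mu G f y (pp_qf mu G f y x) = x)
      /\ set_fun setT `[0, 1] (pp_cdf mu G f y)
      /\ set_surj setT `[0, 1] (pp_cdf mu G f y).
Proof.
move=> mg g0 g1 mh nt.
have na := noties_na _ _ _ mg g0 g1 mh nt.
have key x : x \in `[0, 1] -> pp_cdf mu G f y (pp_qf mu G f y x) = x.
  rewrite in_itv /= => x01.
  by rewrite qf_eq // cdf_eq (CEQ mg g0 g1 mh x na x01).
split => //; split.
  move=> s _ /=; rewrite cdf_eq in_itv /=.
  have fs := CE_fin mg g0 g1 mh s.
  apply/andP; split; first by apply: fine_ge0; exact: (CE_ge0 g0).
  by rewrite -lee_fin (fineK fs); exact: (CE_le1 mg g0 g1 mh s).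
move=> x /= x01; exists (pp_qf mu G f y x) => //.
by apply: key; rewrite inE in x01.
Qed.


Lemma CE01 (g h : T -> R) s : measurable_fun setT g -> (forall t, 0 <= g t) ->
  (\int[mu]_t (g t)%:E = 1)%E -> measurable_fun setT h ->
  0 <= fine (CE mu g h s) <= 1.
Proof.
move=> mg g0 g1 mh; have fs := CE_fin mg g0 g1 mh s.
apply/andP; split; first by apply: fine_ge0; exact: (CE_ge0 g0).
by rewrite -lee_fin (fineK fs); exact: (CE_le1 mg g0 g1 mh s).
Qed.

Lemma part3 (G1 G2 f : T -> Y -> R) y (qk : R -> R) :
  measurable_fun setT (fun t => G1 t y) -> (forall t, 0 < G1 t y) ->
  (\int[mu]_t (G1 t y)%:E = 1)%E ->
  measurable_fun setT (fun t => G2 t y) -> (forall t, 0 < G2 t y) ->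
  (\int[mu]_t (G2 t y)%:E = 1)%E ->
  measurable_fun setT (fun t => f t y) ->
  ~ pp_has_ties mu G1 f -> ~ pp_has_ties mu G2 f ->
  (forall x, qk x = fine (Pg mu (fun t => G1 t y)
      [set t | (CE mu (fun t => G2 t y) (fun t => f t y) (f t y)%:E <= x%:E)%E])) ->
  (forall x : R, qk x = pp_cdf mu G1 f y (pp_qf mu G2 f y x))
  /\ set_bij `[0, 1] `[0, 1] qk.
Proof.
move=> mg1 g1p int1 mg2 g2p int2 mh nt1 nt2 Hq.
have g10 t : 0 <= G1 t y by exact: ltW.
have g20 t : 0 <= G2 t y by exact: ltW.
have na1 := noties_na _ _ _ mg1 g10 int1 mh nt1.
have na2 := noties_na _ _ _ mg2 g20 int2 mh nt2.
have E x : qk x = fine (CE mu (fun t => G1 t y) (fun t => f t y)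
                   (Q mu (fun t => G2 t y) (fun t => f t y) x)).
  by rewrite Hq (q_core mg1 g1p mg2 g2p int2 mh na2).
split.
  by move=> x; rewrite E cdf_eq qf_eq.
split.
- by move=> x _; rewrite /= E in_itv /=; exact: CE01.
- move=> x x'; rewrite !inE /= !in_itv /= => x01 x01' /=; rewrite !E => H.
  have := congr1 EFin H; rewrite !fineK ?(CE_fin mg1 g10 int1 mh) // => H'.
  have CQ := CEQ mg2 g20 int2 mh x na2 x01.
  have CQ' := CEQ mg2 g20 int2 mh x' na2 x01'.
  have : x%:E = x'%:E; last by case.
  rewrite -CQ -CQ'.
  have [le|le] := leP (Q mu (fun t => G2 t y) (fun t => f t y) x)
                      (Q mu (fun t => G2 t y) (fun t => f t y) x').
    exact: (CE_eq mg1 g1p int1 mg2 g2p mh _ _ le H').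
  apply: esym; exact: (CE_eq mg1 g1p int1 mg2 g2p mh _ _ (ltW le) (esym H')).
- move=> z /=; rewrite in_itv /= => z01.
  set s := Q mu (fun t => G1 t y) (fun t => f t y) z.
  have Cs := CEQ mg1 g10 int1 mh z na1 z01.
  set x := fine (CE mu (fun t => G2 t y) (fun t => f t y) s).
  have x01 : 0 <= x <= 1 by exact: CE01.
  exists x; first by rewrite /= in_itv /=.
  have CQ := CEQ mg2 g20 int2 mh x na2 x01.
  have Cx : CE mu (fun t => G2 t y) (fun t => f t y) s = x%:E.
    by rewrite /x fineK // (CE_fin mg2 g20 int2 mh).
  have H2 : CE mu (fun t => G2 t y) (fun t => f t y)
               (Q mu (fun t => G2 t y) (fun t => f t y) x) =
             CE mu (fun t => G2 t y) (fun t => f t y) s by rewrite CQ Cx.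
  have H1 : CE mu (fun t => G1 t y) (fun t => f t y)
               (Q mu (fun t => G2 t y) (fun t => f t y) x) =
             CE mu (fun t => G1 t y) (fun t => f t y) s.
    have [le|le] := leP (Q mu (fun t => G2 t y) (fun t => f t y) x) s.
      exact: (CE_eq mg2 g2p int2 mg1 g1p mh _ _ le H2).
    apply: esym; exact: (CE_eq mg2 g2p int2 mg1 g1p mh _ _ (ltW le) (esym H2)).
  by rewrite E H1 Cs.
Qed.


Lemma rk_eq (phi f : T -> Y -> R) x t y :
  measurable_fun setT (fun t => phi t y) -> (forall t, 0 <= phi t y) ->
  (\int[mu]_t (phi t y)%:E = 1)%E -> measurable_fun setT (fun t => f t y) ->
  ~ pp_has_ties mu phi f ->
  pp_rk mu phi f x t y =
    ((fine (CE mu (fun t => phi t y) (fun t => f t y) (f t y)%:E) <= x)%R)%:R.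
Proof.
move=> mg g0 g1 mh nt.
have na := noties_na _ _ _ mg g0 g1 mh nt.
rewrite /pp_rk atom_eq na /= cdf_eq.
set c := fine (CE _ _ _ _).
have [cx|cx] := leP c x.
  rewrite (_ : _ `&` _ = `[0, 1]%classic).
    by rewrite lebesgue_measure_itv /= lte_fin ltr01 /= subr0.
  apply/seteqP; split => u /=.
    by move=> [u01 _]; rewrite in_itv /=.
  by rewrite in_itv /= => u01; split => //; rewrite mulr0 subr0.
rewrite (_ : _ `&` _ = set0) ?measure0 //.
apply/seteqP; split => u //= [_]; rewrite mulr0 subr0 => cx'.
by move: cx; rewrite ltNge cx'.
Qed.

Lemma qk_eq prior obs (phi f : T -> Y -> R) x y :
  measurable_fun setT (fun t => phi t y) -> (forall t, 0 <= phi t y) ->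
  (\int[mu]_t (phi t y)%:E = 1)%E -> measurable_fun setT (fun t => f t y) ->
  ~ pp_has_ties mu phi f ->
  pp_qk mu prior obs phi f x y = fine (Pg mu (fun t => pp_post mu prior obs t y)
      [set t | (CE mu (fun t => phi t y) (fun t => f t y) (f t y)%:E <= x%:E)%E]).
Proof.
move=> mg g0 g1 mh nt.
rewrite /pp_qk.
under eq_integral => t _ do rewrite (rk_eq _ _ x t y mg g0 g1 mh nt) mulrC.
rewrite int_indicP; congr (fine (Pg _ _ _)); apply/seteqP; split => t /=.
  by rewrite -lee_fin fineK // (CE_fin mg g0 g1 mh).
by rewrite -lee_fin fineK // (CE_fin mg g0 g1 mh).
Qed.

End Link.

Theorem mainTheorem11 (R : realType)
  (dT : measure_display) (T : measurableType dT)
  (dY : measure_display) (Y : measurableType dY)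
  (mu : {measure set T -> \bar R}) (nu : {measure set Y -> \bar R})
  (prior : T -> R) (obs : T -> Y -> R) (phi : T -> Y -> R) (f : T -> Y -> R)
  (* prior density on Theta (positive-valued) *)
  (prior_meas : measurable_fun setT prior)
  (prior_pos : forall t, 0 < prior t)
  (prior_int : (\int[mu]_t (prior t)%:E = 1)%E)
  (* observation density on Y (positive-valued) *)
  (obs_meas : measurable_fun setT (fun z : T * Y => obs z.1 z.2))
  (obs_pos : forall t y, 0 < obs t y)
  (obs_int : forall t, (\int[nu]_y (obs t y)%:E = 1)%E)
  (* the posterior is well defined *)
  (marg_fin : forall y, (pp_marg mu prior obs y < +oo)%E)
  (* posterior family (positive-valued) *)
  (phi_meas : measurable_fun setT (fun z : T * Y => phi z.1 z.2))
  (phi_pos : forall t y, 0 < phi t y)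
  (phi_int : forall y, (\int[mu]_t (phi t y)%:E = 1)%E)
  (* test quantity *)
  (f_meas : measurable_fun setT (fun z : T * Y => f z.1 z.2)) :
  [/\
   (* (1) *)
   (~ pp_has_ties mu (pp_post mu prior obs) f ->
    forall y : Y,
      (forall x : R, x \in `[0, 1] ->
         pp_cdf mu (pp_post mu prior obs) f y (pp_qf mu (pp_post mu prior obs) f y x) = x)
      /\ set_fun setT `[0, 1] (pp_cdf mu (pp_post mu prior obs) f y)
      /\ set_surj setT `[0, 1] (pp_cdf mu (pp_post mu prior obs) f y)),
   (* (2) *)
   (~ pp_has_ties mu phi f ->
    forall y : Y,
      (forall x : R, x \in `[0, 1] -> pp_cdf mu phi f y (pp_qf mu phi f y x) = x)
      /\ set_fun setT `[0, 1] (pp_cdf mu phi f y)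
      /\ set_surj setT `[0, 1] (pp_cdf mu phi f y)) &
   (* (3) *)
   (~ pp_has_ties mu (pp_post mu prior obs) f -> ~ pp_has_ties mu phi f ->
    forall y : Y,
      (forall x : R,
         pp_qk mu prior obs phi f x y
         = pp_cdf mu (pp_post mu prior obs) f y (pp_qf mu phi f y x))
      /\ set_bij `[0, 1] `[0, 1] (fun x => pp_qk mu prior obs phi f x y))].
Proof.
have mf y : measurable_fun setT (fun t => f t y).
  exact: (measurable_fun_pair1 y f_meas).
have mobs y : measurable_fun setT (fun t => obs t y).
  exact: (measurable_fun_pair1 y obs_meas).
have mphi y : measurable_fun setT (fun t => phi t y).
  exact: (measurable_fun_pair1 y phi_meas).
have phi0 y t : 0 <= phi t y by exact: ltW.
have mop y : measurable_fun setT (fun t => obs t y * prior t).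
  exact: measurable_realfun.measurable_funM.
have op_pos y t : 0 < obs t y * prior t by rewrite mulr_gt0.
have marg0 y : (0 < pp_marg mu prior obs y)%E.
  rewrite lt0e; apply/andP; split; last first.
    by apply: integral_ge0 => t _; rewrite lee_fin ltW.
  apply/eqP => m0.
  have mu0 := Pg_null (mop y) (op_pos y) measurableT m0.
  have := null_Pg prior_meas measurableT mu0.
  by rewrite /Pg prior_int => /eqP; rewrite onee_eq0.
have mfin y : pp_marg mu prior obs y = (fine (pp_marg mu prior obs y))%:E.
  by rewrite fineK // ge0_fin_numE ?marg_fin // ltW.
have m0 y : 0 < fine (pp_marg mu prior obs y).
  by apply: fine_gt0; rewrite marg0 marg_fin.
have mpost y : measurable_fun setT (fun t => pp_post mu prior obs t y).
  rewrite /pp_post; apply: measurable_realfun.measurable_funM => //; exact: measurable_cst.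
have post_pos y t : 0 < pp_post mu prior obs t y.
  by rewrite /pp_post divr_gt0.
have post0 y t : 0 <= pp_post mu prior obs t y by exact: ltW.
have post_int y : (\int[mu]_t (pp_post mu prior obs t y)%:E = 1)%E.
  rewrite /pp_post.
  under eq_integral => t _ do rewrite EFinM.
  rewrite ge0_integralZr //; last 3 first.
  - exact/measurable_realfun.measurable_EFinP.
  - by move=> t _; rewrite lee_fin ltW.
  - by rewrite lee_fin invr_ge0 ltW.
  change (\int[mu]_t ((obs t y * prior t)%:E))%E with (pp_marg mu prior obs y).
  by rewrite {1}mfin -EFinM divff // gt_eqF.
split.
- move=> nt y; exact: (part12 mu (pp_post mu prior obs) f y (mpost y) (post0 y) (post_int y) (mf y) nt).
- move=> nt y; exact: (part12 mu phi f y (mphi y) (phi0 y) (phi_int y) (mf y) nt).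
- move=> nt1 nt2 y.
  apply: (part3 mu (pp_post mu prior obs) phi f y _ (mpost y) (post_pos y) (post_int y) (mphi y) (phi_pos^~ y)
            (phi_int y) (mf y) nt1 nt2) => x.
  exact: (qk_eq mu prior obs phi f x y (mphi y) (phi0 y) (phi_int y) (mf y) nt2).
Qed.
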